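(* Fix $\epsilon>0$, $\psi$ as in the context, and $\eta>0$ small enough that for $\lambda\in P(\epsilon,\eta)$ the cuts of $h_\lambda$ lie outside the closed unit disk. There is a constant $C$, depending only on $p,\epsilon,\psi,\eta$, such that for all $R>1$ and all $\lambda\in P(\epsilon,\eta)$, $$\oint_{\Gamma_R}|g_\lambda(u)|\,\Big(\frac{1}{1+|u|}\Big)^{2+\frac1p}\,|du|\le C\,|\lambda|^{\frac1{4p^2}}.$$
   Context: Fix an integer $p\ge2$. Let $T_p(z)$ be the Fuss–Catalan function: the unique solution of $zT^p-T+1=0$ analytic on $\mathbb C\setminus[(p-1)^{p-1}/p^p,\infty)$ with $T_p(0)=1$. Square roots are principal branches. For $\lambda\in\mathbb C$ set $f_\lambda(u)=\sqrt{T_p(-\lambda u^{2p-2})}$, $h_\lambda(u)=uf_\lambda(u)$ and $g_\lambda(u)=h_\lambda(u)-u$. For $\epsilon,\eta>0$ let $P(\epsilon,\eta)=\{\lambda\in\mathbb C:0<|\lambda|<\eta,\ |\arg\lambda|<\pi-\epsilon\}$. The function $h_\lambda$ is analytic away from cuts lying on the rays $\arg u=\frac{\pi-\arg\lambda}{2p-2}+\frac{k\pi}{p-1}$ ($k=-p+2,\dots,p-1$), at $|u|\ge|\lambda|^{-1/(2p-2)}(p-1)^{1/2}p^{-p/(2p-2)}$. Fix an angle $\psi\in(0,\pi/4)$, small enough (depending on $\epsilon,p$) that for every $\lambda$ with $|\arg\lambda|\le\pi-\epsilon$ these rays avoid the double sector $\{|\arg u|\le\psi\}\cup\{|\arg(-u)|\le\psi\}$.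 For $R>1$, the keyhole contour $\Gamma_R$ is the positively oriented boundary of $$D_R=\{|u|<R\}\cap\big(\{|u|<1\}\cup\{|\arg u|<\psi\}\cup\{|\arg(-u)|<\psi\}\big).$$ *)

(* Defs.v *)
From Stdlib Require Import Reals Lra ClassicalEpsilon.
Open Scope R_scope.

Record CC := mkCC { Re : R; Im : R }.

Definition C0 : CC := mkCC 0 0.
Definition C1 : CC := mkCC 1 0.
Definition RtoC (x : R) : CC := mkCC x 0.
Definition Cadd (z w : CC) : CC := mkCC (Re z + Re w) (Im z + Im w).
Definition Copp (z : CC) : CC := mkCC (- Re z) (- Im z).
Definition Csub (z w : CC) : CC := Cadd z (Copp w).
Definition Cmul (z w : CC) : CC :=
  mkCC (Re z * Re w - Im z * Im w) (Re z * Im w + Im z * Re w).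
Fixpoint Cpow (z : CC) (n : nat) : CC :=
  match n with O => C1 | S m => Cmul z (Cpow z m) end.
Definition Cnorm (z : CC) : R := sqrt (Re z * Re z + Im z * Im z).
Definition Cinv (z : CC) : CC :=
  let d := Re z * Re z + Im z * Im z in mkCC (Re z / d) (- Im z / d).
Definition Cdiv (z w : CC) : CC := Cmul z (Cinv w).

(* principal argument, with values in (-PI, PI] *)
Definition Carg (z : CC) : R :=
  let x := Re z in let y := Im z in
  if Rlt_dec 0 x then atan (y / x)
  else if Rlt_dec x 0 then
         (if Rle_dec 0 y then atan (y / x) + PI else atan (y / x) - PI)
  else if Rlt_dec 0 y then PI / 2
  else if Rlt_dec y 0 then - (PI / 2) else 0.

(* principal square root (branch cut on the negative real axis) *)
Definition Csqrt (z : CC) : CC :=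
  let x := Re z in let y := Im z in
  mkCC (sqrt ((Cnorm z + x) / 2))
       ((if Rle_dec 0 y then 1 else -1) * sqrt ((Cnorm z - x) / 2)).

Definition polar (r t : R) : CC := mkCC (r * cos t) (r * sin t).

Definition Cderiv_at (f : CC -> CC) (z l : CC) : Prop :=
  forall e, 0 < e -> exists d, 0 < d /\
    forall h, h <> C0 -> Cnorm h < d ->
      Cnorm (Csub (Cdiv (Csub (f (Cadd z h)) (f z)) h) l) < e.
Definition holomorphic_at (f : CC -> CC) (z : CC) : Prop :=
  exists l, Cderiv_at f z l.

(* branch point (p-1)^(p-1)/p^p and the slit plane C \ [rho, +oo) *)
Definition FC_rho (p : nat) : R := (INR p - 1) ^ (p - 1) / INR p ^ p.
Definition in_slit_plane (p : nat) (z : CC) : Prop :=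
  ~ (Im z = 0 /\ FC_rho p <= Re z).

(* T is the Fuss-Catalan function T_p: analytic on the slit plane, T(0)=1,
   and z T^p - T + 1 = 0 there (this characterizes T_p uniquely on the slit plane). *)
Definition is_FussCatalan (p : nat) (T : CC -> CC) : Prop :=
  T C0 = C1 /\
  (forall z, in_slit_plane p z -> holomorphic_at T z) /\
  (forall z, in_slit_plane p z ->
     Cadd (Csub (Cmul z (Cpow (T z) p)) (T z)) C1 = C0).

Definition f_lam (p : nat) (T : CC -> CC) (lam u : CC) : CC :=
  Csqrt (T (Copp (Cmul lam (Cpow u (2 * p - 2))))).
Definition h_lam (p : nat) (T : CC -> CC) (lam u : CC) : CC := Cmul u (f_lam p T lam u).
Definition g_lam (p : nat) (T : CC -> CC) (lam u : CC) : CC := Csub (h_lam p T lam u) u.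

Definition inP (eps eta : R) (lam : CC) : Prop :=
  0 < Cnorm lam < eta /\ Rabs (Carg lam) < PI - eps.

(* Total Riemann integral: the value of RiemannInt when f is Riemann integrable
   on [a,b] (proof-irrelevant by RiemannInt_P5). *)
Definition RInt (f : R -> R) (a b : R) : R :=
  epsilon (inhabits 0)
    (fun v => exists pr : Riemann_integrable f a b, RiemannInt pr = v).

(* Arc-length integral  \oint_{Gamma_R} F |du|  over the keyhole contour
   Gamma_R = boundary of D_R, split into its pieces:
   - two unit-circle arcs  psi <= arg u <= pi - psi,  -(pi-psi) <= arg u <= -psi,
   - four radial segments 1 <= |u| <= R along arg u = psi, -psi, pi-psi, -(pi-psi),
   - two arcs of radius R: |arg u| <= psi and |arg(-u)| <= psi. *)
Definition keyhole_arclength (psi Rr : R) (F : CC -> R) : R :=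
  RInt (fun t => F (polar 1 t)) psi (PI - psi)
  + RInt (fun t => F (polar 1 t)) (- (PI - psi)) (- psi)
  + RInt (fun r => F (polar r psi)) 1 Rr
  + RInt (fun r => F (polar r (- psi))) 1 Rr
  + RInt (fun r => F (polar r (PI - psi))) 1 Rr
  + RInt (fun r => F (polar r (- (PI - psi)))) 1 Rr
  + RInt (fun t => Rr * F (polar Rr t)) (- psi) psi
  + RInt (fun t => Rr * F (polar Rr t)) (PI - psi) (PI + psi).

Definition in_double_sector (psi : R) (u : CC) : Prop :=
  Rabs (Carg u) <= psi \/ Rabs (Carg (Copp u)) <= psi.

(* the cut rays of h_lambda: arg u = (pi - arg lam)/(2p-2) + k pi/(p-1),
   k = -p+2, ..., p-1 *)
Definition cut_ray_angle (p : nat) (lam : CC) (k : Z) : R :=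
  (PI - Carg lam) / (2 * INR p - 2) + IZR k * PI / (INR p - 1).

(* Main.v *)
Require Import Defs.
From Stdlib Require Import Reals ZArith.
From Stdlib Require Import Lra Lia Psatz ClassicalEpsilon FunctionalExtensionality.
From Coquelicot Require Coquelicot.
Import Defs.
Open Scope R_scope.


Lemma CC_eq (a b : CC) : Re a = Re b -> Im a = Im b -> a = b.
Proof. destruct a, b; simpl; intros; subst; reflexivity. Qed.

Lemma sqrt_le_of (X S : R) : 0 <= S -> X <= S * S -> sqrt X <= S.
Proof.
  intros HS HX. rewrite <- (sqrt_square S HS).
  destruct (Rle_or_lt 0 X).
  - apply sqrt_le_1_alt; lra.
  - rewrite sqrt_neg_0 by lra. apply sqrt_pos.
Qed.

Lemma Cnorm_nonneg z : 0 <= Cnorm z.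
Proof. apply sqrt_pos. Qed.

Lemma Cnorm_sq z : Cnorm z * Cnorm z = Re z * Re z + Im z * Im z.
Proof. unfold Cnorm. apply sqrt_sqrt. nra. Qed.

Lemma Cnorm_mul a b : Cnorm (Cmul a b) = Cnorm a * Cnorm b.
Proof.
  unfold Cnorm, Cmul; simpl. rewrite <- sqrt_mult by nra. f_equal. ring.
Qed.

Lemma Cnorm_pow z n : Cnorm (Cpow z n) = Cnorm z ^ n.
Proof.
  induction n; simpl.
  - unfold Cnorm, C1; simpl. replace (1*1+0*0) with 1 by ring. apply sqrt_1.
  - rewrite Cnorm_mul, IHn. reflexivity.
Qed.

Lemma Cnorm_add a b : Cnorm (Cadd a b) <= Cnorm a + Cnorm b.
Proof.
  unfold Cadd; simpl. unfold Cnorm at 1; simpl.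
  apply sqrt_le_of. pose proof (Cnorm_nonneg a); pose proof (Cnorm_nonneg b); lra.
  pose proof (Cnorm_sq a) as Ha. pose proof (Cnorm_sq b) as Hb.
  pose proof (Cnorm_nonneg a); pose proof (Cnorm_nonneg b).
  assert (Re a * Re b + Im a * Im b <= Cnorm a * Cnorm b).
  { destruct (Rle_or_lt (Re a * Re b + Im a * Im b) 0). nra.
    assert ((Re a * Re b + Im a * Im b) * (Re a * Re b + Im a * Im b) <=
      (Cnorm a * Cnorm b) * (Cnorm a * Cnorm b)).
    { replace (Cnorm a * Cnorm b * (Cnorm a * Cnorm b)) with
      ((Cnorm a * Cnorm a) * (Cnorm b * Cnorm b)) by ring. rewrite Ha, Hb.
      pose proof (Rle_0_sqr (Re a * Im b - Im a * Re b)). unfold Rsqr in *. nra. }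
    destruct (Rle_or_lt (Re a * Re b + Im a * Im b) (Cnorm a * Cnorm b)); auto.
    exfalso. assert (0 <= Cnorm a * Cnorm b) by nra. nra. }
  nra.
Qed.

Lemma Cnorm_opp a : Cnorm (Copp a) = Cnorm a.
Proof. unfold Cnorm, Copp; simpl. f_equal; ring. Qed.

Lemma Cnorm_sub a b : Cnorm (Csub a b) <= Cnorm a + Cnorm b.
Proof. unfold Csub. rewrite <- (Cnorm_opp b). apply Cnorm_add. Qed.

Lemma Cnorm_sub_ge a b : Cnorm a - Cnorm b <= Cnorm (Csub a b).
Proof.
  assert (a = Cadd (Csub a b) b) as E by (apply CC_eq; unfold Csub, Cadd, Copp; simpl; ring).
  pose proof (Cnorm_add (Csub a b) b). rewrite <- E in H. lra.
Qed.

Lemma Re_le z : Rabs (Re z) <= Cnorm z.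
Proof.
  unfold Cnorm. rewrite <- sqrt_Rsqr_abs. apply sqrt_le_1_alt. unfold Rsqr; nra.
Qed.
Lemma Im_le z : Rabs (Im z) <= Cnorm z.
Proof.
  unfold Cnorm. rewrite <- sqrt_Rsqr_abs. apply sqrt_le_1_alt. unfold Rsqr; nra.
Qed.
Lemma Cnorm_le_abs z : Cnorm z <= Rabs (Re z) + Rabs (Im z).
Proof.
  unfold Cnorm. apply sqrt_le_of. pose proof (Rabs_pos (Re z)); pose proof (Rabs_pos (Im z)); lra.
  pose proof (Rabs_pos (Re z)); pose proof (Rabs_pos (Im z)).
  assert (Rabs (Re z) * Rabs (Re z) = Re z * Re z) by (rewrite <- Rabs_mult; apply Rabs_right; nra).
  assert (Rabs (Im z) * Rabs (Im z) = Im z * Im z) by (rewrite <- Rabs_mult; apply Rabs_right; nra).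
  nra.
Qed.

Lemma Cnorm_polar r t : Cnorm (polar r t) = Rabs r.
Proof.
  unfold Cnorm, polar; simpl. rewrite <- sqrt_Rsqr_abs. f_equal.
  pose proof (sin2_cos2 t). unfold Rsqr in *. nra.
Qed.

Lemma polar_mul a s b t : Cmul (polar a s) (polar b t) = polar (a*b) (s+t).
Proof. apply CC_eq; unfold Cmul, polar; simpl; rewrite ?cos_plus, ?sin_plus; ring. Qed.

Lemma Cpow_polar r t n : Cpow (polar r t) n = polar (r ^ n) (INR n * t).
Proof.
  induction n.
  - apply CC_eq; simpl; rewrite ?Rmult_0_l, ?cos_0, ?sin_0; ring.
  - simpl Cpow. rewrite IHn, polar_mul.
    replace (r ^ S n) with (r * r ^ n) by (simpl; ring).
    replace (INR (S n) * t) with (t + INR n * t) by (rewrite S_INR; ring). reflexivity.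
Qed.

Lemma Copp_polar r t : Copp (polar r t) = polar r (t + PI).
Proof. apply CC_eq; unfold Copp, polar; simpl; rewrite ?neg_cos, ?neg_sin; ring. Qed.

Lemma Cnorm_C0 : Cnorm C0 = 0.
Proof. unfold Cnorm; simpl. replace (0*0+0*0) with 0 by ring. apply sqrt_0. Qed.

Lemma Cnorm_eq0 z : Cnorm z = 0 -> z = C0.
Proof.
  intro H. pose proof (Cnorm_sq z). rewrite H in H0.
  apply CC_eq; simpl; nra.
Qed.


Lemma sqrt_ratio x y : x <> 0 ->
  sqrt (1 + (y / x)²) = sqrt (x * x + y * y) / Rabs x.
Proof.
  intro Hx. assert (0 < Rabs x) by (apply Rabs_pos_lt; auto).
  apply (Rmult_eq_reg_r (Rabs x)); [|lra].
  unfold Rdiv at 2. rewrite Rmult_assoc, Rinv_l, Rmult_1_r by lra.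
  rewrite <- (sqrt_Rsqr (Rabs x)) at 1 by lra.
  rewrite <- sqrt_mult by (unfold Rsqr; nra).
  f_equal. unfold Rsqr. rewrite <- Rabs_mult, Rabs_right by nra.
  field. auto.
Qed.

Lemma Carg_spec z : z <> C0 -> z = polar (Cnorm z) (Carg z).
Proof.
  intro Hz. destruct z as [x y]. unfold Carg, polar, Cnorm; simpl.
  assert (HN: 0 < sqrt (x*x+y*y)).
  { apply sqrt_lt_R0. destruct (Req_dec x 0); destruct (Req_dec y 0); subst.
    - exfalso; apply Hz; reflexivity.
    - nra. - nra. - nra. }
  destruct (Rlt_dec 0 x).
  - rewrite cos_atan, sin_atan, sqrt_ratio by lra. rewrite Rabs_right by lra.
    apply CC_eq; simpl; field; lra.
  - destruct (Rlt_dec x 0).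
    + assert (Rabs x = - x) by (apply Rabs_left; lra).
      destruct (Rle_dec 0 y).
      * rewrite neg_cos, neg_sin, cos_atan, sin_atan, sqrt_ratio by lra. rewrite H.
        apply CC_eq; simpl; field; lra.
      * rewrite cos_minus, sin_minus, cos_PI, sin_PI, cos_atan, sin_atan, sqrt_ratio by lra. rewrite H.
        apply CC_eq; simpl; field; lra.
    + assert (x = 0) by lra. subst.
      destruct (Rlt_dec 0 y).
      * rewrite cos_PI2, sin_PI2. replace (0*0+y*y) with (y*y) by ring.
        rewrite sqrt_square by lra. apply CC_eq; simpl; ring.
      * destruct (Rlt_dec y 0).
        -- rewrite cos_neg, sin_neg, cos_PI2, sin_PI2. replace (0*0+y*y) with ((-y)*(-y)) by ring.
           rewrite sqrt_square by lra. apply CC_eq; simpl; ring.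
        -- exfalso; apply Hz. assert (y = 0) by lra. subst; reflexivity.
Qed.

Lemma Carg_polar r t : 0 < r -> - (PI/2) < t < PI/2 -> Carg (polar r t) = t.
Proof.
  intros Hr Ht. pose proof (cos_gt_0 t ltac:(lra) ltac:(lra)).
  unfold Carg, polar; simpl. destruct (Rlt_dec 0 (r * cos t)).
  - replace (r * sin t / (r * cos t)) with (tan t) by (unfold tan; field; lra).
    apply atan_tan; lra.
  - exfalso; nra.
Qed.

Lemma Copp_polar' r t : Copp (polar r t) = polar r (t - PI).
Proof.
  apply CC_eq; unfold Copp, polar; simpl; rewrite ?cos_minus, ?sin_minus, ?cos_PI, ?sin_PI; ring.
Qed.


Lemma cos_Zperiod x q : cos (x + 2 * IZR q * PI) = cos x.
Proof.
  destruct (Z_le_gt_dec 0 q).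
  - rewrite <- (Z2Nat.id q) by lia. rewrite <- INR_IZR_INZ. apply cos_period.
  - assert (0 <= - q)%Z by lia. rewrite <- (Z2Nat.id (-q)) in H by lia.
    set (k := Z.to_nat (-q)) in *.
    assert (IZR q = - INR k). { unfold k. rewrite INR_IZR_INZ, Z2Nat.id by lia. rewrite opp_IZR. ring. }
    rewrite H0. rewrite <- (cos_period (x + 2 * - INR k * PI) k). f_equal. ring.
Qed.

Lemma sin_Zperiod x q : sin (x + 2 * IZR q * PI) = sin x.
Proof.
  destruct (Z_le_gt_dec 0 q).
  - rewrite <- (Z2Nat.id q) by lia. rewrite <- INR_IZR_INZ. apply sin_period.
  - assert (0 <= - q)%Z by lia.
    set (k := Z.to_nat (-q)) in *.
    assert (IZR q = - INR k). { unfold k. rewrite INR_IZR_INZ, Z2Nat.id by lia. rewrite opp_IZR. ring. }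
    rewrite H0. rewrite <- (sin_period (x + 2 * - INR k * PI) k). f_equal. ring.
Qed.

Lemma polar_Zperiod r t q : polar r (t + 2 * IZR q * PI) = polar r t.
Proof. unfold polar. rewrite cos_Zperiod, sin_Zperiod. reflexivity. Qed.

Lemma FC_rho_pos p : (2 <= p)%nat -> 0 < FC_rho p.
Proof.
  intro Hp. unfold FC_rho. assert (2 <= INR p) by (replace 2 with (INR 2) by (simpl; ring); apply le_INR; auto).
  apply Rdiv_lt_0_compat; apply pow_lt; lra.
Qed.

Lemma angle_zero phi : sin phi = 0 -> 0 < cos phi -> exists q : Z, phi = 2 * IZR q * PI.
Proof.
  intros Hs Hc. destruct (sin_eq_0_0 phi Hs) as [m Hm].
  destruct (Zeven_odd_dec m) as [He|Ho].
  - destruct (Zeven_ex m He) as [q Hq]. exists q. rewrite Hm, Hq, mult_IZR. ring.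
  - destruct (Zodd_ex m Ho) as [q Hq]. exfalso.
    rewrite Hm, Hq, plus_IZR, mult_IZR in Hc.
    replace ((2 * IZR q + 1) * PI) with (PI + 2 * IZR q * PI) in Hc by ring.
    rewrite cos_Zperiod, cos_PI in Hc. lra.
Qed.

Definition zfun (p : nat) (lam u : CC) : CC := Copp (Cmul lam (Cpow u (2 * p - 2))).

Lemma INR_2p2 p : (2 <= p)%nat -> INR (2 * p - 2) = 2 * INR p - 2.
Proof. intro. rewrite minus_INR by lia. rewrite mult_INR. simpl. ring. Qed.

Lemma slit_of_sector p eps psi lam r th :
  (2 <= p)%nat ->
  (forall (lam : CC) (k : Z), lam <> C0 -> Rabs (Carg lam) <= PI - eps ->
       (- (Z.of_nat p) + 2 <= k <= Z.of_nat p - 1)%Z ->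
       forall r, 0 < r -> ~ in_double_sector psi (polar r (cut_ray_angle p lam k))) ->
  lam <> C0 -> Rabs (Carg lam) <= PI - eps -> 0 < r ->
  in_double_sector psi (polar r th) ->
  in_slit_plane p (zfun p lam (polar r th)).
Proof.
  intros Hp Hcut Hl Ha Hr Hds [Him Hre].
  pose proof (FC_rho_pos p Hp) as Hrho.
  assert (Hs : 0 < Cnorm lam).
  { destruct (Rle_lt_or_eq_dec 0 (Cnorm lam) (Cnorm_nonneg lam)); auto.
    exfalso; apply Hl; apply Cnorm_eq0; auto. }
  set (a := Carg lam) in *. set (n := (2 * p - 2)%nat) in *.
  assert (Hz : zfun p lam (polar r th) = polar (Cnorm lam * r ^ n) (a + INR n * th + PI)).
  { unfold zfun. rewrite (Carg_spec lam Hl) at 1. fold a. fold n.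
    rewrite Cpow_polar, polar_mul, Copp_polar. f_equal. }
  rewrite Hz in Him, Hre. unfold polar in Him, Hre; simpl in Him, Hre.
  assert (Hm : 0 < Cnorm lam * r ^ n) by (apply Rmult_lt_0_compat; auto; apply pow_lt; auto).
  assert (Hsin : sin (a + INR n * th + PI) = 0).
  { apply (Rmult_eq_reg_l (Cnorm lam * r ^ n)); lra. }
  assert (Hcos : 0 < cos (a + INR n * th + PI)).
  { destruct (Rlt_or_le 0 (cos (a + INR n * th + PI))); auto. nra. }
  destruct (angle_zero _ Hsin Hcos) as [q Hq].
  assert (HP : 2 <= INR p) by (replace 2 with (INR 2) by (simpl; ring); apply le_INR; auto).
  assert (Hn : INR n = 2 * INR p - 2) by (apply INR_2p2; auto).
  set (k0 := (q - 1)%Z).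
  set (M := (2 * Z.of_nat p - 2)%Z).
  assert (HM : (0 < M)%Z) by (unfold M; lia).
  set (k' := (((k0 + Z.of_nat p - 2) mod M) - Z.of_nat p + 2)%Z).
  set (j := ((k0 + Z.of_nat p - 2) / M)%Z).
  assert (Hk : k0 = (k' + M * j)%Z).
  { unfold k', j. pose proof (Z.div_mod (k0 + Z.of_nat p - 2) M ltac:(lia)). lia. }
  assert (Hrange : (- (Z.of_nat p) + 2 <= k' <= Z.of_nat p - 1)%Z).
  { unfold k'. pose proof (Z.mod_pos_bound (k0 + Z.of_nat p - 2) M HM). unfold M in *. lia. }
  apply (Hcut lam k' Hl Ha Hrange r Hr).
  replace (cut_ray_angle p lam k') with (th + 2 * IZR (- j) * PI).
  { rewrite polar_Zperiod. auto. }
  unfold cut_ray_angle. fold a.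
  assert (Hk0 : IZR k0 = IZR q - 1) by (unfold k0; rewrite minus_IZR; reflexivity).
  assert (Hkk : IZR k' = IZR k0 - (2 * INR p - 2) * IZR j).
  { rewrite Hk. rewrite plus_IZR, mult_IZR. unfold M. rewrite minus_IZR, mult_IZR.
    rewrite <- INR_IZR_INZ. ring. }
  rewrite Hkk, Hk0, opp_IZR.
  assert (Hth : th = (2 * IZR q * PI - PI - a) / (2 * INR p - 2)).
  { apply (Rmult_eq_reg_r (2 * INR p - 2)); [|lra]. unfold Rdiv. rewrite Rmult_assoc, Rinv_l by lra.
    rewrite <- Hn. lra. }
  rewrite Hth. field. lra.
Qed.


Lemma Cdiv_mul a h : h <> C0 -> Cmul (Cdiv a h) h = a.
Proof.
  intro Hh. assert (Hd : Re h * Re h + Im h * Im h <> 0).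
  { intro E. apply Hh. apply CC_eq; simpl; nra. }
  destruct a as [x y], h as [u v]; simpl in *.
  apply CC_eq; unfold Cdiv, Cmul, Cinv; simpl; field; auto.
Qed.

Lemma hol_cont f z : holomorphic_at f z ->
  forall e, 0 < e -> exists d, 0 < d /\
    forall w, Cnorm (Csub w z) < d -> Cnorm (Csub (f w) (f z)) < e.
Proof.
  intros [l Hl] e He. destruct (Hl 1 Rlt_0_1) as [d1 [Hd1 H1]].
  pose proof (Cnorm_nonneg l).
  exists (Rmin d1 (e / (Cnorm l + 2))). split.
  { apply Rmin_pos; auto. apply Rdiv_lt_0_compat; lra. }
  intros w Hw. set (h := Csub w z).
  assert (Hwz : w = Cadd z h) by (apply CC_eq; unfold h, Csub, Cadd, Copp; simpl; ring).
  destruct (Req_dec (Cnorm h) 0) as [E|E].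
  - apply Cnorm_eq0 in E. rewrite Hwz, E.
    replace (Cadd z C0) with z by (apply CC_eq; unfold Cadd; simpl; ring).
    replace (Csub (f z) (f z)) with C0 by (apply CC_eq; unfold Csub, Cadd, Copp; simpl; ring).
    rewrite Cnorm_C0; auto.
  - assert (hne : h <> C0) by (intro F; apply E; rewrite F; apply Cnorm_C0).
    assert (Hh1 : Cnorm h < d1) by (fold h in Hw; pose proof (Rmin_l d1 (e / (Cnorm l + 2))); lra).
    assert (Hh2 : Cnorm h < e / (Cnorm l + 2)) by (fold h in Hw; pose proof (Rmin_r d1 (e / (Cnorm l + 2))); lra).
    specialize (H1 h hne Hh1). rewrite <- Hwz in H1.
    set (q := Cdiv (Csub (f w) (f z)) h) in *.
    pose proof (Cnorm_sub_ge q l).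
    assert (Eq : Csub (f w) (f z) = Cmul q h) by (unfold q; rewrite Cdiv_mul; auto).
    rewrite Eq, Cnorm_mul.
    pose proof (Cnorm_nonneg h). pose proof (Cnorm_nonneg q).
    assert (Cnorm q <= Cnorm l + 2) by lra.
    apply Rle_lt_trans with ((Cnorm l + 2) * Cnorm h). nra.
    apply (Rmult_lt_compat_l (Cnorm l + 2)) in Hh2; [|lra].
    replace ((Cnorm l + 2) * (e / (Cnorm l + 2))) with e in Hh2 by (field; lra). lra.
Qed.

Definition cc (phi : R -> CC) (x : R) : Prop :=
  forall e, 0 < e -> exists d, 0 < d /\ forall y, Rabs (y - x) < d -> Cnorm (Csub (phi y) (phi x)) < e.

Lemma cc_of_parts phi x :
  continuity_pt (fun t => Re (phi t)) x -> continuity_pt (fun t => Im (phi t)) x -> cc phi x.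
Proof.
  intros H1 H2 e He.
  destruct (H1 (e/2) ltac:(lra)) as [a1 [Ha1 A1]].
  destruct (H2 (e/2) ltac:(lra)) as [a2 [Ha2 A2]].
  exists (Rmin a1 a2). split. apply Rmin_pos; auto.
  intros y Hy. destruct (Req_dec y x) as [->|Hne].
  - replace (Csub (phi x) (phi x)) with C0 by (apply CC_eq; unfold Csub, Cadd, Copp; simpl; ring).
    rewrite Cnorm_C0; lra.
  - pose proof (Rmin_l a1 a2); pose proof (Rmin_r a1 a2).
    assert (D1 := A1 y). assert (D2 := A2 y). simpl in D1, D2. unfold R_dist, D_x, no_cond in D1, D2.
    assert (Hd1 : Rabs (Re (phi y) - Re (phi x)) < e/2) by (apply D1; repeat split; auto; lra).
    assert (Hd2 : Rabs (Im (phi y) - Im (phi x)) < e/2) by (apply D2; repeat split; auto; lra).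
    eapply Rle_lt_trans. apply Cnorm_le_abs. unfold Csub, Cadd, Copp; simpl.
    unfold Rminus in Hd1, Hd2. lra.
Qed.

Lemma parts_of_cc phi x : cc phi x ->
  continuity_pt (fun t => Re (phi t)) x /\ continuity_pt (fun t => Im (phi t)) x.
Proof.
  intros H. split; intros e He; destruct (H e He) as [d [Hd Hy]]; exists d; split; auto;
  intros y [_ Hy2]; simpl; unfold R_dist; simpl in Hy2; unfold R_dist in Hy2;
  specialize (Hy y Hy2).
  - eapply Rle_lt_trans; [|apply Hy]. pose proof (Re_le (Csub (phi y) (phi x))).
    unfold Csub, Cadd, Copp in H0; simpl in H0. exact H0.
  - eapply Rle_lt_trans; [|apply Hy]. pose proof (Im_le (Csub (phi y) (phi x))).
    unfold Csub, Cadd, Copp in H0; simpl in H0. exact H0.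
Qed.

Lemma cc_comp (f : CC -> CC) phi x :
  cc phi x ->
  (forall e, 0 < e -> exists d, 0 < d /\
    forall w, Cnorm (Csub w (phi x)) < d -> Cnorm (Csub (f w) (f (phi x))) < e) ->
  cc (fun t => f (phi t)) x.
Proof.
  intros Hp Hf e He. destruct (Hf e He) as [d [Hd Hw]].
  destruct (Hp d Hd) as [a [Ha Hy]]. exists a; split; auto.
Qed.

Lemma cc_mul phi psi x : cc phi x -> cc psi x -> cc (fun t => Cmul (phi t) (psi t)) x.
Proof.
  intros H1 H2. destruct (parts_of_cc _ _ H1) as [A B]. destruct (parts_of_cc _ _ H2) as [C D].
  apply cc_of_parts; unfold Cmul; simpl.
  - apply continuity_pt_minus; apply continuity_pt_mult; auto.
  - apply continuity_pt_plus; apply continuity_pt_mult; auto.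
Qed.

Lemma cc_const c x : cc (fun _ => c) x.
Proof. apply cc_of_parts; apply continuity_pt_const; intros a b; reflexivity. Qed.

Lemma cc_pow phi x n : cc phi x -> cc (fun t => Cpow (phi t) n) x.
Proof.
  intro H. induction n; simpl.
  - apply cc_const.
  - apply cc_mul; auto.
Qed.

Lemma cc_opp phi x : cc phi x -> cc (fun t => Copp (phi t)) x.
Proof.
  intro H. destruct (parts_of_cc _ _ H) as [A B].
  apply cc_of_parts; unfold Copp; simpl; apply continuity_pt_opp; auto.
Qed.

Lemma cont_cos x : continuity_pt cos x.
Proof. apply derivable_continuous_pt, derivable_pt_cos. Qed.
Lemma cont_sin x : continuity_pt sin x.
Proof. apply derivable_continuous_pt, derivable_pt_sin. Qed.

Lemma cc_polar_r t x : cc (fun r => polar r t) x.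
Proof.
  apply cc_of_parts; unfold polar; simpl; apply continuity_pt_mult;
  try apply derivable_continuous_pt, derivable_pt_id; apply continuity_pt_const; intros a b; reflexivity.
Qed.

Lemma cc_polar_t r x : cc (fun t => polar r t) x.
Proof.
  apply cc_of_parts; unfold polar; simpl; apply continuity_pt_mult;
  try (apply continuity_pt_const; intros a b; reflexivity).
  apply cont_cos. apply cont_sin.
Qed.


Lemma cont_Cnorm phi x : cc phi x -> continuity_pt (fun t => Cnorm (phi t)) x.
Proof.
  intros H e He. destruct (H e He) as [d [Hd Hy]]. exists d; split; auto.
  intros y [_ Hy2]. simpl in *. unfold R_dist in *. specialize (Hy y Hy2).
  pose proof (Cnorm_sub_ge (phi y) (phi x)).
  pose proof (Cnorm_sub_ge (phi x) (phi y)).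
  assert (Cnorm (Csub (phi x) (phi y)) = Cnorm (Csub (phi y) (phi x))).
  { rewrite <- Cnorm_opp. f_equal. apply CC_eq; unfold Csub, Cadd, Copp; simpl; ring. }
  apply Rabs_def1; lra.
Qed.

Lemma FC_eq (A w : CC) : Cadd (Csub A w) C1 = C0 -> Cnorm A = Cnorm (Csub w C1).
Proof.
  intro H. f_equal. destruct A as [a1 a2], w as [w1 w2].
  unfold Cadd, Csub, Copp, C1, C0 in *; simpl in *. injection H; intros.
  apply CC_eq; simpl; lra.
Qed.

Lemma root_norm p T z : is_FussCatalan p T -> in_slit_plane p z ->
  Cnorm z * Cnorm (T z) ^ p = Cnorm (Csub (T z) C1).
Proof.
  intros [_ [_ H]] Hz. rewrite <- Cnorm_pow, <- Cnorm_mul. apply FC_eq. apply H; auto.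
Qed.

Lemma Cnorm_C1 : Cnorm C1 = 1.
Proof. unfold Cnorm; simpl. replace (1*1+0*0) with 1 by ring. apply sqrt_1. Qed.

Lemma sub1_bounds w : Cnorm w - 1 <= Cnorm (Csub w C1) <= Cnorm w + 1.
Proof.
  pose proof (Cnorm_sub_ge w C1). pose proof (Cnorm_sub w C1). rewrite Cnorm_C1 in *. lra.
Qed.

Lemma pow_ge_self N n : 1 <= N -> (1 <= n)%nat -> N <= N ^ n.
Proof.
  intros HN Hn. induction n. lia.
  destruct n. simpl; lra. simpl in *. assert (N <= N * N ^ n) by (apply IHn; lia). nra.
Qed.

Lemma bound_far p (Z N D delta : R) : (2 <= p)%nat -> 0 < delta -> delta <= Z ->
  0 <= N -> Z * N ^ p = D -> D <= N + 1 -> N <= Rmax 1 (2 / delta).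
Proof.
  intros Hp Hd HZ HN E HD. destruct (Rle_or_lt N 1).
  { eapply Rle_trans; [|apply Rmax_l]; auto. }
  eapply Rle_trans; [|apply Rmax_r].
  assert (N ^ p = N * N ^ (p - 1)) by (replace p with (S (p-1)) at 1 by lia; reflexivity).
  assert (N <= N ^ (p-1)) by (apply pow_ge_self; [lra|lia]).
  assert (N * N <= N ^ p) by nra.
  assert (delta * N ^ p <= Z * N ^ p) by (apply Rmult_le_compat_r; [apply pow_le|]; lra).
  assert (delta * N * N <= 2 * N) by nra.
  assert (delta * N <= 2) by nra.
  apply (Rmult_le_reg_l delta); auto. replace (delta * (2 / delta)) with 2 by (field; lra). lra.
Qed.

Definition delta0 (p : nat) : R := / 2 ^ (p + 2).

Lemma delta0_pos p : 0 < delta0 p.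
Proof. unfold delta0. apply Rinv_0_lt_compat, pow_lt; lra. Qed.

Lemma gap p (Z N D : R) : 0 <= Z -> Z < delta0 p -> Z * N ^ p = D -> N - 1 <= D ->
  3/2 <= N <= 2 -> False.
Proof.
  intros HZ0 HZ E HD HN.
  assert (N ^ p <= 2 ^ p) by (apply pow_incr; lra).
  assert (Z * 2 ^ p < 1/4).
  { unfold delta0 in HZ. rewrite pow_add in HZ. simpl in HZ.
    assert (0 < 2 ^ p) by (apply pow_lt; lra).
    apply (Rmult_lt_compat_r (2^p)) in HZ; auto.
    replace (/ (2 ^ p * (2 * (2 * 1))) * 2 ^ p) with (1/4) in HZ by (field; lra). lra. }
  assert (0 <= N ^ p) by (apply pow_le; lra).
  assert (Z * N ^ p <= Z * 2 ^ p) by (apply Rmult_le_compat_l; auto). lra.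
Qed.

Definition seg (z : CC) (t : R) : CC := mkCC (t * Re z) (t * Im z).

Lemma Cnorm_seg z t : 0 <= t <= 1 -> Cnorm (seg z t) <= Cnorm z.
Proof.
  intro Ht. unfold Cnorm, seg; simpl. apply sqrt_le_1_alt.
  assert (t*t <= 1) by nra. pose proof (Rle_0_sqr (Re z)); pose proof (Rle_0_sqr (Im z)).
  unfold Rsqr in *. nra.
Qed.

Lemma slit_small p z : (2 <= p)%nat -> Cnorm z < FC_rho p -> in_slit_plane p z.
Proof.
  intros Hp Hz [_ H]. pose proof (Re_le z). pose proof (Rle_abs (Re z)). lra.
Qed.

Definition delta1 (p : nat) : R := Rmin (delta0 p) (FC_rho p).

Lemma branch p T z : (2 <= p)%nat -> is_FussCatalan p T -> Cnorm z < delta1 p ->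
  Cnorm (T z) < 3/2.
Proof.
  intros Hp HT Hz.
  assert (Hz0 : Cnorm z < delta0 p) by (pose proof (Rmin_l (delta0 p) (FC_rho p)); unfold delta1 in Hz; lra).
  assert (Hz1 : Cnorm z < FC_rho p) by (pose proof (Rmin_r (delta0 p) (FC_rho p)); unfold delta1 in Hz; lra).
  assert (Hg : forall t, 0 <= t <= 1 -> ~ (3/2 <= Cnorm (T (seg z t)) <= 2)).
  { intros t Ht HN. pose proof (Cnorm_seg z t Ht).
    assert (Hs : in_slit_plane p (seg z t)) by (apply slit_small; auto; lra).
    pose proof (root_norm p T _ HT Hs). pose proof (sub1_bounds (T (seg z t))).
    apply (gap p (Cnorm (seg z t)) (Cnorm (T (seg z t))) (Cnorm (Csub (T (seg z t)) C1)));
      auto; try lra. apply Cnorm_nonneg. }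
  assert (E1 : seg z 1 = z) by (apply CC_eq; unfold seg; simpl; ring).
  assert (E0 : seg z 0 = C0) by (apply CC_eq; unfold seg; simpl; ring).
  destruct (Rlt_or_le (Cnorm (T z)) (3/2)) as [|H]; auto. exfalso.
  destruct (Rle_or_lt (Cnorm (T z)) 2) as [H2|H2].
  { apply (Hg 1); [lra|]. rewrite E1; lra. }
  assert (Hc : forall a, 0 <= a <= 1 -> continuity_pt (fun t => Cnorm (T (seg z t)) - 7/4) a).
  { intros a Ha. apply continuity_pt_minus; [|apply continuity_pt_const; intros u v; reflexivity].
    apply cont_Cnorm. apply cc_comp.
    - apply cc_of_parts; unfold seg; simpl; apply continuity_pt_mult;
        try apply derivable_continuous_pt, derivable_pt_id; apply continuity_pt_const; intros u v; reflexivity.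
    - apply hol_cont. destruct HT as [_ [HH _]]. apply HH. apply slit_small; auto.
      pose proof (Cnorm_seg z a Ha). lra. }
  destruct (Ranalysis5.IVT_interv _ 0 1 Hc Rlt_0_1) as [t [Ht Eq]].
  - rewrite E0. destruct HT as [H0 _]. rewrite H0, Cnorm_C1. lra.
  - rewrite E1. lra.
  - apply (Hg t Ht). lra.
Qed.

Definition Qf (w : CC) : R := Cnorm (Csub (Csqrt w) C1).

Lemma Qf_sq w : Qf w * Qf w = Cnorm w + 1 - 2 * sqrt ((Cnorm w + Re w) / 2).
Proof.
  unfold Qf. rewrite Cnorm_sq. pose proof (Re_le w).
  pose proof (Rle_abs (Re w)). pose proof (Rle_abs (- Re w)). rewrite Rabs_Ropp in *.
  unfold Csqrt, Csub, Cadd, Copp, C1; simpl.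
  assert (A : sqrt ((Cnorm w + Re w) / 2) * sqrt ((Cnorm w + Re w) / 2) = (Cnorm w + Re w)/2)
    by (apply sqrt_sqrt; lra).
  assert (B : sqrt ((Cnorm w - Re w) / 2) * sqrt ((Cnorm w - Re w) / 2) = (Cnorm w - Re w)/2)
    by (apply sqrt_sqrt; lra).
  destruct (Rle_dec 0 (Im w)); nra.
Qed.

Lemma Qf_eq w : Qf w = sqrt (Cnorm w + 1 - 2 * sqrt ((Cnorm w + Re w) / 2)).
Proof.
  rewrite <- Qf_sq. rewrite sqrt_square; auto. apply Cnorm_nonneg.
Qed.

Lemma Qf_le1 w : Qf w <= Cnorm (Csub w C1).
Proof.
  assert (0 <= Qf w) by apply Cnorm_nonneg. pose proof (Cnorm_nonneg (Csub w C1)).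
  assert (Qf w * Qf w <= Cnorm (Csub w C1) * Cnorm (Csub w C1)).
  { rewrite Qf_sq, Cnorm_sq. unfold Csub, Cadd, Copp, C1; simpl.
    pose proof (Cnorm_sq w). pose proof (Re_le w). pose proof (Rle_abs (Re w)). pose proof (Rle_abs (- Re w)).
    rewrite Rabs_Ropp in *. set (a := sqrt ((Cnorm w + Re w) / 2)).
    assert (A : a * a = (Cnorm w + Re w)/2) by (apply sqrt_sqrt; lra).
    assert (0 <= a) by apply sqrt_pos. pose proof (Cnorm_nonneg w).
    assert (2 * a <= Cnorm w + 1) by (pose proof (Rle_0_sqr (a - 1)); unfold Rsqr in *; nra).
    assert (0 <= (Cnorm w + 1/2 - (2*a - 1/2)) * (Cnorm w + 1/2 + (2*a - 1/2))) by
      (apply Rmult_le_pos; lra).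
    nra. }
  destruct (Rle_or_lt (Qf w) (Cnorm (Csub w C1))); auto. nra.
Qed.

Lemma Qf_le2 w : Qf w <= sqrt (Cnorm w + 1).
Proof.
  rewrite Qf_eq. apply sqrt_le_1_alt. pose proof (sqrt_pos ((Cnorm w + Re w) / 2)). lra.
Qed.


Definition th (p : nat) : R := 1 / (4 * INR p ^ 2).
Definition ex (p : nat) : R := 1 + INR (2 * p - 2) * th p - (2 + 1 / INR p).
Definition Mb (p : nat) : R := Rmax 1 (2 / delta1 p).
Definition Kc (p : nat) : R :=
  Rmax (2 ^ p * Rpower (delta1 p) (1 - th p)) (sqrt (Mb p + 1) * Rpower (delta1 p) (- th p)).

Lemma INR_p2 p : (2 <= p)%nat -> 2 <= INR p.
Proof. intro. replace 2 with (INR 2) by (simpl; ring). apply le_INR; auto. Qed.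

Lemma th_bounds p : (2 <= p)%nat -> 0 < th p < 1.
Proof.
  intro Hp. pose proof (INR_p2 p Hp). unfold th. split.
  - apply Rdiv_lt_0_compat; [lra|]. nra.
  - apply (Rmult_lt_reg_r (4 * INR p ^ 2)). nra. unfold Rdiv. rewrite Rmult_assoc, Rinv_l by nra. nra.
Qed.

Lemma ex_bound p : (2 <= p)%nat -> ex p < -1.
Proof.
  intro Hp. pose proof (INR_p2 p Hp). unfold ex, th. rewrite INR_2p2 by auto.
  assert (E : (2 * INR p - 2) * (1 / (4 * INR p ^ 2)) = (INR p - 1) / (2 * INR p * INR p)) by (field; lra).
  rewrite E.
  assert ((INR p - 1) / (2 * INR p * INR p) < 1 / INR p).
  { apply (Rmult_lt_reg_r (2 * INR p * INR p)). nra.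
    unfold Rdiv. rewrite Rmult_assoc, Rinv_l by nra. field_simplify; nra. }
  lra.
Qed.

Lemma delta1_pos p : (2 <= p)%nat -> 0 < delta1 p.
Proof. intro. unfold delta1. apply Rmin_pos. apply delta0_pos. apply FC_rho_pos; auto. Qed.

Lemma Rpower_pos x y : 0 < Rpower x y.
Proof. unfold Rpower. apply exp_pos. Qed.

Lemma Qf_bound p T z : (2 <= p)%nat -> is_FussCatalan p T -> in_slit_plane p z -> 0 < Cnorm z ->
  Qf (T z) <= Kc p * Rpower (Cnorm z) (th p).
Proof.
  intros Hp HT Hs Hz. pose proof (th_bounds p Hp). pose proof (delta1_pos p Hp).
  pose proof (root_norm p T z HT Hs) as Hr. pose proof (sub1_bounds (T z)).
  pose proof (Cnorm_nonneg (T z)).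
  destruct (Rlt_or_le (Cnorm z) (delta1 p)) as [Hlt|Hge].
  - pose proof (branch p T z Hp HT Hlt).
    eapply Rle_trans. apply Qf_le1. rewrite <- Hr.
    assert (Cnorm (T z) ^ p <= 2 ^ p) by (apply pow_incr; lra).
    assert (E : Cnorm z = Rpower (Cnorm z) (th p) * Rpower (Cnorm z) (1 - th p)).
    { rewrite <- Rpower_plus. replace (th p + (1 - th p)) with 1 by ring. rewrite Rpower_1; auto. }
    assert (Rpower (Cnorm z) (1 - th p) <= Rpower (delta1 p) (1 - th p)) by (apply Rle_Rpower_l; lra).
    pose proof (Rpower_pos (Cnorm z) (th p)). pose proof (Rpower_pos (Cnorm z) (1 - th p)).
    eapply Rle_trans with (2 ^ p * Rpower (delta1 p) (1 - th p) * Rpower (Cnorm z) (th p)).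
    + rewrite E at 1. assert (0 <= Cnorm (T z) ^ p) by (apply pow_le; lra).
      assert (0 < 2 ^ p) by (apply pow_lt; lra).
      set (B := Rpower (Cnorm z) (th p)) in *. set (C := Rpower (Cnorm z) (1 - th p)) in *.
      set (D := Rpower (delta1 p) (1 - th p)) in *. set (X := Cnorm (T z) ^ p) in *.
      assert (B * C * X <= B * D * X) by (apply Rmult_le_compat_r; [lra|]; apply Rmult_le_compat_l; lra).
      assert (B * D * X <= B * D * 2 ^ p) by (apply Rmult_le_compat_l; nra).
      nra.
    + apply Rmult_le_compat_r; [lra|]. apply Rmax_l.
  - pose proof (bound_far p (Cnorm z) (Cnorm (T z)) _ (delta1 p) Hp H0 Hge H2 Hr ltac:(lra)).
    eapply Rle_trans. apply Qf_le2.
    assert (sqrt (Cnorm (T z) + 1) <= sqrt (Mb p + 1)) by (apply sqrt_le_1_alt; unfold Mb; lra).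
    assert (Rpower (delta1 p) (th p) <= Rpower (Cnorm z) (th p)) by (apply Rle_Rpower_l; lra).
    assert (1 <= Rpower (delta1 p) (- th p) * Rpower (Cnorm z) (th p)).
    { rewrite Rpower_Ropp. pose proof (Rpower_pos (delta1 p) (th p)).
      apply (Rmult_le_reg_l (Rpower (delta1 p) (th p))); auto.
      rewrite <- Rmult_assoc, Rinv_r by lra. lra. }
    eapply Rle_trans with (sqrt (Mb p + 1) * Rpower (delta1 p) (- th p) * Rpower (Cnorm z) (th p)).
    + pose proof (sqrt_pos (Mb p + 1)). rewrite Rmult_assoc.
      assert (sqrt (Mb p + 1) * 1 <= sqrt (Mb p + 1) * (Rpower (delta1 p) (- th p) * Rpower (Cnorm z) (th p)))
        by (apply Rmult_le_compat_l; lra). lra.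
    + apply Rmult_le_compat_r. left; apply Rpower_pos. apply Rmax_r.
Qed.

Lemma g_norm p T lam u : Cnorm (g_lam p T lam u) = Cnorm u * Qf (T (zfun p lam u)).
Proof.
  unfold g_lam, h_lam, f_lam, Qf, zfun. rewrite <- Cnorm_mul. f_equal.
  apply CC_eq; unfold Csub, Cadd, Copp, Cmul, C1; simpl; ring.
Qed.

Lemma exp_le_mono x y : x <= y -> exp x <= exp y.
Proof. intro H. destruct (Rle_lt_or_eq_dec _ _ H). left; apply exp_increasing; auto. subst; lra. Qed.

Lemma Rpower_inv_le x c : 1 <= x -> 0 <= c -> Rpower (/ (1 + x)) c <= Rpower x (- c).
Proof.
  intros Hx Hc. unfold Rpower. rewrite ln_Rinv by lra. apply exp_le_mono.
  assert (ln x <= ln (1 + x)) by (left; apply ln_increasing; lra). nra.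
Qed.

Lemma Rpower_1_base y : Rpower 1 y = 1.
Proof. unfold Rpower. rewrite ln_1, Rmult_0_r. apply exp_0. Qed.

Lemma integrand_bound p T lam u : (2 <= p)%nat -> is_FussCatalan p T -> 0 < Cnorm lam ->
  1 <= Cnorm u -> in_slit_plane p (zfun p lam u) ->
  Cnorm (g_lam p T lam u) * Rpower (/ (1 + Cnorm u)) (2 + 1 / INR p)
  <= Kc p * Rpower (Cnorm lam) (th p) * Rpower (Cnorm u) (ex p).
Proof.
  intros Hp HT Hl Hu Hs. pose proof (INR_p2 p Hp).
  set (r := Cnorm u) in *.
  assert (Hz : Cnorm (zfun p lam u) = Cnorm lam * r ^ (2 * p - 2)).
  { unfold zfun. rewrite Cnorm_opp, Cnorm_mul, Cnorm_pow. reflexivity. }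
  assert (Hzp : 0 < Cnorm (zfun p lam u)) by (rewrite Hz; apply Rmult_lt_0_compat; auto; apply pow_lt; lra).
  pose proof (Qf_bound p T _ Hp HT Hs Hzp) as HQ.
  rewrite g_norm. fold r.
  assert (E : Rpower (Cnorm (zfun p lam u)) (th p) = Rpower (Cnorm lam) (th p) * Rpower r (INR (2*p-2) * th p)).
  { rewrite Hz, <- Rpower_mult_distr by (auto; apply pow_lt; lra).
    rewrite <- (Rpower_pow (2*p-2) r) by lra. rewrite Rpower_mult. reflexivity. }
  rewrite E in HQ.
  assert (Hc : 0 <= 2 + 1 / INR p) by (assert (0 < 1 / INR p) by (apply Rdiv_lt_0_compat; lra); lra).
  pose proof (Rpower_inv_le r _ Hu Hc) as HR.
  assert (0 <= Qf (T (zfun p lam u))) by apply Cnorm_nonneg.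
  assert (0 < Rpower (/ (1 + r)) (2 + 1 / INR p)) by apply Rpower_pos.
  assert (Er : Rpower r (ex p) = r * Rpower r (INR (2*p-2) * th p) * Rpower r (- (2 + 1 / INR p))).
  { unfold ex. rewrite <- (Rpower_1 r) at 2 by lra. rewrite <- !Rpower_plus. f_equal. }
  rewrite Er.
  pose proof (Rpower_pos (Cnorm lam) (th p)). pose proof (Rpower_pos r (INR (2*p-2) * th p)).
  assert (0 <= Kc p).
  { unfold Kc. eapply Rle_trans; [|apply Rmax_l]. apply Rmult_le_pos. apply pow_le; lra. left; apply Rpower_pos. }
  set (Q := Qf (T (zfun p lam u))) in *.
  set (A := Rpower (/ (1 + r)) (2 + 1 / INR p)) in *.
  set (B := Rpower r (- (2 + 1 / INR p))) in *.
  set (P := Rpower r (INR (2 * p - 2) * th p)) in *.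
  set (L := Rpower (Cnorm lam) (th p)) in *.
  assert (r * Q * A <= r * (Kc p * L * P) * A) by (apply Rmult_le_compat_r; [lra|]; apply Rmult_le_compat_l; lra).
  assert (r * (Kc p * L * P) * A <= r * (Kc p * L * P) * B).
  { apply Rmult_le_compat_l; auto. apply Rmult_le_pos; [lra|]. apply Rmult_le_pos; [|lra]. nra. }
  replace (Kc p * L * (r * P * B)) with (r * (Kc p * L * P) * B) by ring. lra.
Qed.


Lemma continuity_pt_ext (f g : R -> R) x : (forall y, f y = g y) -> continuity_pt f x -> continuity_pt g x.
Proof.
  intros H1 H2. replace g with f; auto. apply FunctionalExtensionality.functional_extensionality; auto.
Qed.

Lemma cont_sqrt_comp h x : continuity_pt h x -> 0 <= h x -> continuity_pt (fun t => sqrt (h t)) x.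
Proof.
  intros H1 H2. apply (continuity_pt_comp h sqrt x H1). apply continuity_pt_sqrt; auto.
Qed.

Lemma cont_Rpower_comp h c x : continuity_pt h x -> 0 < h x -> continuity_pt (fun t => Rpower (h t) c) x.
Proof.
  intros H1 H2. apply (continuity_pt_comp h (fun y => Rpower y c) x H1).
  apply derivable_continuous_pt. exists (c * Rpower (h x) (c - 1)). apply derivable_pt_lim_power; auto.
Qed.

Definition Fint (p : nat) (T : CC -> CC) (lam u : CC) : R :=
  Cnorm (g_lam p T lam u) * Rpower (/ (1 + Cnorm u)) (2 + 1 / INR p).

Lemma cc_zfun p lam phi x : cc phi x -> cc (fun t => zfun p lam (phi t)) x.
Proof.
  intro H. unfold zfun. apply cc_opp. apply cc_mul. apply cc_const. apply cc_pow; auto.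
Qed.

Lemma cont_Fint p T lam phi x : is_FussCatalan p T -> cc phi x ->
  in_slit_plane p (zfun p lam (phi x)) -> continuity_pt (fun t => Fint p T lam (phi t)) x.
Proof.
  intros HT Hphi Hs.
  assert (HW : cc (fun t => T (zfun p lam (phi t))) x).
  { apply (cc_comp T (fun t => zfun p lam (phi t))). apply cc_zfun; auto.
    apply hol_cont. destruct HT as [_ [H _]]. apply H; auto. }
  apply (continuity_pt_ext
    (fun t => Cnorm (phi t) * sqrt (Cnorm (T (zfun p lam (phi t))) + 1
        - 2 * sqrt ((Cnorm (T (zfun p lam (phi t))) + Re (T (zfun p lam (phi t)))) / 2))
      * Rpower (/ (1 + Cnorm (phi t))) (2 + 1 / INR p))).
  { intro t. unfold Fint. rewrite g_norm, Qf_eq. reflexivity. }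
  pose proof (cont_Cnorm _ _ HW) as HN. destruct (parts_of_cc _ _ HW) as [HRe _].
  pose proof (cont_Cnorm _ _ Hphi) as HNp.
  apply continuity_pt_mult; [apply continuity_pt_mult|].
  - auto.
  - set (W := T (zfun p lam (phi x))).
    assert (HA : continuity_pt (fun t => sqrt ((Cnorm (T (zfun p lam (phi t))) + Re (T (zfun p lam (phi t)))) / 2)) x).
    { apply cont_sqrt_comp.
      - apply continuity_pt_mult. apply continuity_pt_plus; auto.
        apply continuity_pt_const; intros a b; reflexivity.
      - pose proof (Re_le W). pose proof (Rle_abs (- Re W)). rewrite Rabs_Ropp in *. fold W. lra. }
    apply cont_sqrt_comp.
    + apply continuity_pt_minus. apply continuity_pt_plus; auto.
      apply continuity_pt_const; intros a b; reflexivity.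
      apply continuity_pt_mult; auto. apply continuity_pt_const; intros a b; reflexivity.
    + rewrite <- Qf_sq. fold W. pose proof (Cnorm_nonneg (Csub (Csqrt W) C1)). unfold Qf. nra.
  - apply cont_Rpower_comp.
    + apply continuity_pt_inv. apply continuity_pt_plus; auto.
      apply continuity_pt_const; intros a b; reflexivity.
      pose proof (Cnorm_nonneg (phi x)). lra.
    + pose proof (Cnorm_nonneg (phi x)). apply Rinv_0_lt_compat. lra.
Qed.

Module FTCm.
Import Coquelicot.Coquelicot.

Lemma int_power K e R : e < -1 -> 1 < R -> 0 <= K ->
  forall pr : Riemann_integrable (fun r => K * Rpower r e) 1 R,
  RiemannInt pr <= K / (- (e + 1)).
Proof.
  intros He HR HK pr.
  set (c := K / (e + 1)).
  assert (Hd : forall x, 1 <= x <= R -> derivable_pt_lim (fun r => c * Rpower r (e + 1)) x (K * Rpower x e)).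
  { intros x Hx. replace (K * Rpower x e) with (c * ((e + 1) * Rpower x (e + 1 - 1))).
    2: { unfold c. replace (e + 1 - 1) with e by ring. field. lra. }
    apply (derivable_pt_lim_scal (fun r => Rpower r (e + 1))). apply derivable_pt_lim_power; lra. }
  assert (E : RInt (fun r => K * Rpower r e) 1 R =
     c * Rpower R (e + 1) - c * Rpower 1 (e + 1)).
  { apply is_RInt_unique.
    apply (is_RInt_derive (fun r => c * Rpower r (e + 1))).
    - intros x Hx. rewrite Rmin_left, Rmax_right in Hx by lra.
      apply is_derive_Reals. apply Hd; auto.
    - intros x Hx. rewrite Rmin_left, Rmax_right in Hx by lra.
      apply continuity_pt_filterlim.
      apply continuity_pt_mult. apply continuity_pt_const; intros u v; reflexivity.
      apply derivable_continuous_pt. exists (e * Rpower x (e - 1)). apply derivable_pt_lim_power; lra. }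
  rewrite (RInt_Reals _ _ _ pr) in E. rewrite E.
  replace (Rpower 1 (e + 1)) with 1 by (unfold Rpower; rewrite ln_1, Rmult_0_r, exp_0; reflexivity). unfold c.
  assert (0 < Rpower R (e + 1)) by (unfold Rpower; apply exp_pos).
  assert (0 < - (e + 1)) by lra.
  replace (K / (e + 1) * Rpower R (e + 1) - K / (e + 1) * 1) with (K / (- (e + 1)) * (1 - Rpower R (e + 1)))
    by (field; lra).
  assert (0 <= K / - (e + 1)) by (apply Rdiv_le_0_compat; lra).
  assert (K / - (e + 1) * (1 - Rpower R (e + 1)) <= K / - (e + 1) * 1) by (apply Rmult_le_compat_l; lra).
  lra.
Qed.

End FTCm.
Import Defs.


Lemma RInt_val f a b (pr : Riemann_integrable f a b) : RInt f a b = RiemannInt pr.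
Proof.
  unfold RInt.
  destruct (epsilon_spec (inhabits 0) (fun v => exists pr : Riemann_integrable f a b, RiemannInt pr = v)
    (ex_intro _ (RiemannInt pr) (ex_intro _ pr eq_refl))) as [pr' E].
  rewrite <- E. apply RiemannInt_P5.
Qed.

Lemma RInt_le_cte f a b c : a <= b -> (forall x, a <= x <= b -> continuity_pt f x) ->
  (forall x, a < x < b -> f x <= c) -> RInt f a b <= c * (b - a).
Proof.
  intros Hab Hc Hb. pose proof (continuity_implies_RiemannInt Hab Hc) as pr.
  rewrite (RInt_val f a b pr).
  assert (prc : Riemann_integrable (fct_cte c) a b).
  { apply continuity_implies_RiemannInt; auto. intros. apply continuity_pt_const. intros u v; reflexivity. }
  rewrite <- (RiemannInt_P15 prc). apply RiemannInt_P19; auto.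
Qed.



Lemma RInt_le_int f g a b (prg : Riemann_integrable g a b) : a <= b ->
  (forall x, a <= x <= b -> continuity_pt f x) ->
  (forall x, a < x < b -> f x <= g x) -> RInt f a b <= RiemannInt prg.
Proof.
  intros Hab Hc Hb. pose proof (continuity_implies_RiemannInt Hab Hc) as pr.
  rewrite (RInt_val f a b pr). apply RiemannInt_P19; auto.
Qed.

Lemma lam_small p lam : (2 <= p)%nat -> 0 < Cnorm lam ->
  1 < Rpower (Cnorm lam) (- (1 / (2 * INR p - 2)))
           * Rpower (INR p - 1) (1 / 2)
           * Rpower (INR p) (- (INR p / (2 * INR p - 2))) ->
  Cnorm lam < FC_rho p.
Proof.
  intros Hp Hs H. pose proof (INR_p2 p Hp).
  set (n := 2 * INR p - 2) in *.
  assert (Hn : 0 < n) by (unfold n; lra).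
  set (X := Rpower (Cnorm lam) (- (1 / n)) * Rpower (INR p - 1) (1 / 2) * Rpower (INR p) (- (INR p / n))) in *.
  assert (H1 : Rpower 1 n < Rpower X n) by (apply Rlt_Rpower_l; [lra | split; lra]).
  rewrite Rpower_1_base in H1.
  unfold X in H1. rewrite <- !Rpower_mult_distr in H1 by (try apply Rmult_lt_0_compat; apply Rpower_pos).
  rewrite !Rpower_mult in H1.
  replace (- (1 / n) * n) with (Ropp 1) in H1 by (field; lra).
  replace (1 / 2 * n) with (INR (p - 1)) in H1 by (unfold n; rewrite minus_INR by lia; simpl; field).
  replace (- (INR p / n) * n) with (- INR p) in H1 by (field; lra).
  rewrite !Rpower_Ropp in H1. rewrite Rpower_1 in H1 by auto.
  replace (INR p - 1) with (INR (p - 1)) in H1 by (rewrite minus_INR by lia; simpl; ring).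
  rewrite Rpower_pow in H1 by (rewrite minus_INR by lia; simpl; lra).
  rewrite Rpower_pow in H1 by lra.
  unfold FC_rho. replace (INR p - 1) with (INR (p - 1)) by (rewrite minus_INR by lia; simpl; ring).
  assert (0 < INR (p - 1) ^ (p - 1)) by (apply pow_lt; rewrite minus_INR by lia; simpl; lra).
  assert (0 < INR p ^ p) by (apply pow_lt; lra).
  apply (Rmult_lt_compat_r (Cnorm lam)) in H1; auto.
  replace (/ Cnorm lam * INR (p - 1) ^ (p - 1) * / INR p ^ p * Cnorm lam) with
    (INR (p - 1) ^ (p - 1) / INR p ^ p) in H1 by (field; lra). lra.
Qed.


Lemma Kc_nonneg p : (2 <= p)%nat -> 0 <= Kc p.
Proof.
  intro. unfold Kc. eapply Rle_trans; [|apply Rmax_l]. apply Rmult_le_pos. apply pow_le; lra. left; apply Rpower_pos.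
Qed.

Lemma unit_arc p T lam a b : (2 <= p)%nat -> is_FussCatalan p T -> 0 < Cnorm lam -> a <= b ->
  (forall t, in_slit_plane p (zfun p lam (polar 1 t))) ->
  RInt (fun t => Fint p T lam (polar 1 t)) a b <= Kc p * Rpower (Cnorm lam) (th p) * (b - a).
Proof.
  intros Hp HT Hl Hab Hs. apply RInt_le_cte; auto.
  - intros x _. apply cont_Fint; [auto | apply cc_polar_t | auto].
  - intros x _. eapply Rle_trans. apply integrand_bound; auto.
    rewrite Cnorm_polar, Rabs_R1; lra.
    rewrite Cnorm_polar, Rabs_R1, Rpower_1_base. lra.
Qed.

Lemma big_arc p T lam R a b : (2 <= p)%nat -> is_FussCatalan p T -> 0 < Cnorm lam -> a <= b -> 1 < R ->
  (forall t, a <= t <= b -> in_slit_plane p (zfun p lam (polar R t))) ->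
  RInt (fun t => R * Fint p T lam (polar R t)) a b <= Kc p * Rpower (Cnorm lam) (th p) * (b - a).
Proof.
  intros Hp HT Hl Hab HR Hs. apply RInt_le_cte; auto.
  - intros x Hx. apply continuity_pt_mult. apply continuity_pt_const; intros u v; reflexivity.
    apply cont_Fint; [auto | apply cc_polar_t | apply Hs; auto].
  - intros x Hx. assert (HRR : Cnorm (polar R x) = R) by (rewrite Cnorm_polar; apply Rabs_right; lra).
    pose proof (integrand_bound p T lam (polar R x) Hp HT Hl ltac:(lra) (Hs x ltac:(lra))) as H.
    replace (Rpower (Cnorm (polar R x)) (ex p)) with (Rpower R (ex p)) in H by (rewrite HRR; auto).
    pose proof (Kc_nonneg p Hp). pose proof (Rpower_pos (Cnorm lam) (th p)).
    assert (E : R * Rpower R (ex p) = Rpower R (ex p + 1)).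
    { rewrite Rpower_plus, Rpower_1 by lra. ring. }
    assert (HR0 : Rpower R (ex p + 1) <= Rpower R 0) by (apply Rle_Rpower; [lra|]; pose proof (ex_bound p Hp); lra).
    rewrite Rpower_O in HR0 by lra.
    apply Rle_trans with (R * (Kc p * Rpower (Cnorm lam) (th p) * Rpower R (ex p))).
    apply Rmult_le_compat_l; [lra | exact H].
    replace (R * (Kc p * Rpower (Cnorm lam) (th p) * Rpower R (ex p))) with
      (Kc p * Rpower (Cnorm lam) (th p) * (R * Rpower R (ex p))) by ring.
    rewrite E. rewrite <- (Rmult_1_r (Kc p * Rpower (Cnorm lam) (th p))) at 2.
    apply Rmult_le_compat_l; nra.
Qed.

Lemma radial p T lam R th0 : (2 <= p)%nat -> is_FussCatalan p T -> 0 < Cnorm lam -> 1 < R ->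
  (forall r, 1 <= r -> in_slit_plane p (zfun p lam (polar r th0))) ->
  RInt (fun r => Fint p T lam (polar r th0)) 1 R <= Kc p * Rpower (Cnorm lam) (th p) / (- (ex p + 1)).
Proof.
  intros Hp HT Hl HR Hs. pose proof (Kc_nonneg p Hp). pose proof (Rpower_pos (Cnorm lam) (th p)).
  set (K := Kc p * Rpower (Cnorm lam) (th p)).
  assert (HK : 0 <= K) by (unfold K; nra).
  assert (prg : Riemann_integrable (fun r => K * Rpower r (ex p)) 1 R).
  { apply continuity_implies_RiemannInt; [lra|]. intros x Hx.
    apply continuity_pt_mult. apply continuity_pt_const; intros u v; reflexivity.
    apply derivable_continuous_pt. exists (ex p * Rpower x (ex p - 1)). apply derivable_pt_lim_power; lra. }
  eapply Rle_trans. apply (RInt_le_int _ _ 1 R prg); [lra| |].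
  - intros x Hx. apply cont_Fint; [auto | apply cc_polar_r | apply Hs; lra].
  - intros x Hx. assert (HRR : Cnorm (polar x th0) = x) by (rewrite Cnorm_polar; apply Rabs_right; lra).
    pose proof (integrand_bound p T lam (polar x th0) Hp HT Hl ltac:(lra) (Hs x ltac:(lra))) as H1.
    replace (Rpower (Cnorm (polar x th0)) (ex p)) with (Rpower x (ex p)) in H1 by (rewrite HRR; auto).
    exact H1.
  - apply FTCm.int_power; auto. apply ex_bound; auto.
Qed.


Theorem mainTheorem5 :
  forall (p : nat) (T : CC -> CC) (eps psi eta : R),
    (2 <= p)%nat ->
    is_FussCatalan p T ->
    0 < eps ->
    0 < psi < PI / 4 ->
    (forall (lam : CC) (k : Z), lam <> C0 -> Rabs (Carg lam) <= PI - eps ->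
       (- (Z.of_nat p) + 2 <= k <= Z.of_nat p - 1)%Z ->
       forall r, 0 < r -> ~ in_double_sector psi (polar r (cut_ray_angle p lam k))) ->
    0 < eta ->
    (forall lam : CC, inP eps eta lam ->
       1 < Rpower (Cnorm lam) (- (1 / (2 * INR p - 2)))
           * Rpower (INR p - 1) (1 / 2)
           * Rpower (INR p) (- (INR p / (2 * INR p - 2)))) ->
    exists Cst : R,
      forall (Rr : R) (lam : CC), 1 < Rr -> inP eps eta lam ->
        keyhole_arclength psi Rr
          (fun u => Cnorm (g_lam p T lam u) * Rpower (/ (1 + Cnorm u)) (2 + 1 / INR p))
        <= Cst * Rpower (Cnorm lam) (1 / (4 * INR p ^ 2)).
Proof.
  assert (Hab : forall x c, Rabs x <= c -> - c <= x <= c).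
  { intros x c Hx. pose proof (Rle_abs x). pose proof (Rle_abs (- x)). rewrite Rabs_Ropp in *. lra. }
  intros p T eps psi eta Hp HT Heps Hpsi Hcut Heta Hsmall.
  pose proof (ex_bound p Hp) as Hex.
  set (g := - (ex p + 1)).
  assert (Hg : 0 < g) by (unfold g; lra).
  exists (Kc p * (4 * PI + 4 / g)).
  intros R lam HR HP.
  pose proof (Hsmall lam HP) as Hsm.
  destruct HP as [[Hs Hse] Harg].
  assert (Hl0 : lam <> C0) by (intro E; rewrite E, Cnorm_C0 in Hs; lra).
  assert (Harg' : Rabs (Carg lam) <= PI - eps) by lra.
  pose proof (lam_small p lam Hp Hs Hsm) as Hrho.
  pose proof PI_RGT_0 as HPI.
  assert (Hunit : forall t, in_slit_plane p (zfun p lam (polar 1 t))).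
  { intro t. apply slit_small; auto. unfold zfun. rewrite Cnorm_opp, Cnorm_mul, Cnorm_pow, Cnorm_polar, Rabs_R1, pow1.
    lra. }
  assert (Hsec : forall r t, 0 < r -> in_double_sector psi (polar r t) -> in_slit_plane p (zfun p lam (polar r t))).
  { intros r t Hr Hd. apply (slit_of_sector p eps psi lam r t Hp Hcut Hl0 Harg' Hr Hd). }
  assert (Hds1 : forall r t, 0 < r -> Rabs t <= psi -> in_double_sector psi (polar r t)).
  { intros r t Hr Ht. left. rewrite Carg_polar; auto. 
    apply Hab in Ht. lra. }
  assert (Hds2 : forall r t, 0 < r -> Rabs (t - PI) <= psi -> in_double_sector psi (polar r t)).
  { intros r t Hr Ht. right. rewrite Copp_polar'. rewrite Carg_polar; auto.
    apply Hab in Ht. lra. }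
  assert (Hds3 : forall r t, 0 < r -> Rabs (t + PI) <= psi -> in_double_sector psi (polar r t)).
  { intros r t Hr Ht. rewrite <- (polar_Zperiod r t 1). apply Hds2; auto.
    replace (t + 2 * IZR 1 * PI - PI) with (t + PI) by (simpl; ring). auto. }
  change (fun u => Cnorm (g_lam p T lam u) * Rpower (/ (1 + Cnorm u)) (2 + 1 / INR p)) with (Fint p T lam).
  change (1 / (4 * INR p ^ 2)) with (th p).
  unfold keyhole_arclength.
  pose proof (Kc_nonneg p Hp). pose proof (Rpower_pos (Cnorm lam) (th p)).
  set (L := Kc p * Rpower (Cnorm lam) (th p)).
  assert (HL : 0 <= L) by (unfold L; nra).
  pose proof (unit_arc p T lam psi (PI - psi) Hp HT Hs ltac:(lra) Hunit) as A1.
  pose proof (unit_arc p T lam (- (PI - psi)) (- psi) Hp HT Hs ltac:(lra) Hunit) as A2.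
  assert (A3 : RInt (fun r => Fint p T lam (polar r psi)) 1 R <= L / g).
  { apply radial; auto. intros r Hr. apply Hsec; [lra|]. apply Hds1; [lra|]. rewrite Rabs_right; lra. }
  assert (A4 : RInt (fun r => Fint p T lam (polar r (- psi))) 1 R <= L / g).
  { apply radial; auto. intros r Hr. apply Hsec; [lra|]. apply Hds1; [lra|].
    rewrite Rabs_Ropp, Rabs_right; lra. }
  assert (A5 : RInt (fun r => Fint p T lam (polar r (PI - psi))) 1 R <= L / g).
  { apply radial; auto. intros r Hr. apply Hsec; [lra|]. apply Hds2; [lra|].
    replace (PI - psi - PI) with (- psi) by ring. rewrite Rabs_Ropp, Rabs_right; lra. }
  assert (A6 : RInt (fun r => Fint p T lam (polar r (- (PI - psi)))) 1 R <= L / g).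
  { apply radial; auto. intros r Hr. apply Hsec; [lra|]. apply Hds3; [lra|].
    replace (- (PI - psi) + PI) with psi by ring. rewrite Rabs_right; lra. }
  assert (A7 : RInt (fun t => R * Fint p T lam (polar R t)) (- psi) psi <= L * (psi - - psi)).
  { apply big_arc; auto; try lra. intros t Ht. apply Hsec; [lra|]. apply Hds1; [lra|].
    apply Rabs_le; lra. }
  assert (A8 : RInt (fun t => R * Fint p T lam (polar R t)) (PI - psi) (PI + psi) <= L * (PI + psi - (PI - psi))).
  { apply big_arc; auto; try lra. intros t Ht. apply Hsec; [lra|]. apply Hds2; [lra|].
    apply Rabs_le; lra. }
  fold L in A1, A2.
  assert (L * (PI - psi - psi) <= L * PI) by (apply Rmult_le_compat_l; lra).
  assert (L * (- psi - - (PI - psi)) <= L * PI) by (apply Rmult_le_compat_l; lra).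
  assert (L * (psi - - psi) <= L * PI) by (apply Rmult_le_compat_l; lra).
  assert (L * (PI + psi - (PI - psi)) <= L * PI) by (apply Rmult_le_compat_l; lra).
  replace (Kc p * (4 * PI + 4 / g) * Rpower (Cnorm lam) (th p)) with (4 * (L * PI) + 4 * (L / g))
    by (unfold L; field; lra).
  lra.
Qed.
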